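(* Let $H_{ij}$, $i=1,\ldots,b$, $j=1,\ldots,s_i$, be $n=\sum_{i=1}^b s_i$ null hypotheses arranged in $b$ blocks, with corresponding $p$-values $P_{ij}$, where each $p$-value of a true null hypothesis is distributed as $U(0,1)$. Assume the rows $(P_{i1},\ldots,P_{is_i})$, $i=1,\ldots,b$, are mutually independent, with arbitrary dependence allowed within each row. Fix $\alpha\in(0,1)$ and apply the following two-stage BH method: (1) set $\tilde P_i=\bar s\min_{1\le j\le s_i}P_{ij}$ with $\bar s=n/b$; (2) order the block $p$-values as $\tilde P_{(1)}\le\cdots\le\tilde P_{(b)}$ and let $B=\max\{1\le i\le b:\tilde P_{(i)}\le i\alpha/b\}$; (3) if this maximum exists, reject $H_{ij}$ for all $(i,j)$ with $\tilde P_i\le\tilde P_{(B)}$ and $P_{ij}\le B\alpha/n$, and otherwise reject nothing. Then for every configuration of true and false null hypotheses the false discovery rate of this method is at most $\alpha$.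
   Context: Write $H_{ij}=0$ if the hypothesis is true and $H_{ij}=1$ if it is false. If $V$ is the number of true null hypotheses rejected and $R$ the total number of rejections, the false discovery rate is $\mathrm{FDR}=E\left(V/\max\{R,1\}\right)$. *)

(* Defs.v *)
From HB Require Import structures.
From mathcomp Require Import all_boot all_order all_algebra.
From mathcomp Require Import all_classical all_reals all_analysis.
Unset Printing Implicit Defensive.
Import Order.TTheory GRing.Theory Num.Theory.
Local Open Scope classical_set_scope.
Local Open Scope ring_scope.

Section TwoStageBH.
Context {R : realType} (b : nat) (s : 'I_b -> nat).

(* p-values P_ij as functions of the outcome w; block i has s i hypotheses. *)
Variable T : Type.
Variable X : forall i : 'I_b, 'I_(s i) -> T -> R.

Definition ntot : nat := (\sum_(i < b) s i)%N.

Definition sbar : R := ntot%:R / b%:R.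

(* min_{1 <= j <= s_i} P_ij (for s_i > 0; the default for an empty block is irrelevant) *)
Definition row_min (i : 'I_b) (w : T) : R :=
  let vals := [seq X i j w | j <- enum 'I_(s i)] in
  foldr Num.min (head 0 vals) vals.

Definition Ptilde (i : 'I_b) (w : T) : R := sbar * row_min i w.

Definition ord_stat (w : T) (k : nat) : R :=
  nth 0 (sort <=%R [seq Ptilde i w | i <- enum 'I_b]) k.-1.

(* B = max { 1 <= k <= b : tilde P_(k) <= k alpha / b }, and 0 if no such k *)
Definition Bidx (alpha : R) (w : T) : nat :=
  (\max_(k < b.+1 | (0 < (k : nat))%N && (ord_stat w k <= (k : nat)%:R * alpha / b%:R)%R) (k : nat))%N.

Definition rejected (alpha : R) (w : T) (i : 'I_b) (j : 'I_(s i)) : bool :=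
  let B := Bidx alpha w in
  [&& (0 < B)%N, Ptilde i w <= ord_stat w B & X i j w <= B%:R * alpha / ntot%:R].

(* H i j = true  iff  H_ij = 1 (hypothesis false) *)
Variable H : forall i : 'I_b, 'I_(s i) -> bool.

Definition Rnum (alpha : R) (w : T) : nat :=
  (\sum_(i < b) \sum_(j < s i) rejected alpha w i j)%N.

Definition Vnum (alpha : R) (w : T) : nat :=
  (\sum_(i < b) \sum_(j < s i) (rejected alpha w i j && ~~ H i j))%N.

Definition FDP (alpha : R) (w : T) : R := (Vnum alpha w)%:R / (maxn (Rnum alpha w) 1)%:R.

End TwoStageBH.

Section Prob.
Context {d : measure_display} {T : measurableType d} {R : realType}.

Definition row_sigma (b : nat) (s : 'I_b -> nat) (X : forall i : 'I_b, 'I_(s i) -> T -> R)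
  (i : 'I_b) : set (set T) :=
  <<s [set E | exists (j : 'I_(s i)) (A : set R), measurable A /\ E = X i j @^-1` A] >>.

(* mutual independence of the rows (finitely many: product rule over all blocks,
   subfamilies are obtained by taking E i = setT) *)
Definition rows_independent (P : probability T R) (b : nat) (s : 'I_b -> nat)
  (X : forall i : 'I_b, 'I_(s i) -> T -> R) : Prop :=
  forall E : 'I_b -> set T, (forall i, row_sigma b s X i (E i)) ->
    P (\bigcap_(i in [set: 'I_b]) E i) = (\prod_(i < b) P (E i))%E.

Definition FDR (P : probability T R) (b : nat) (s : 'I_b -> nat)
  (X : forall i : 'I_b, 'I_(s i) -> T -> R) (H : forall i : 'I_b, 'I_(s i) -> bool)
  (alpha : R) : \bar R :=
  (\int[P]_w (FDP b s T X H alpha w)%:E)%E.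

End Prob.

(* Main.v *)
Require Import Defs.
From HB Require Import structures.
From mathcomp Require Import all_boot all_order all_algebra.
From mathcomp Require Import all_classical all_reals all_analysis.
From mathcomp Require Import ring lra.
From mathcomp Require Import measurable_realfun.
Import Order.TTheory GRing.Theory Num.Theory.
Local Open Scope classical_set_scope.
Local Open Scope ring_scope.

Lemma count_enum_sum (n : nat) (p : pred 'I_n) : count p (enum 'I_n) = (\sum_(i < n) p i)%N.
Proof. rewrite -sum1_count big_enum_cond /= big_mkcond /=. by apply: eq_bigr => i _; case: (p i). Qed.

Section Comb.
Context {R : realType} (b : nat) (s : 'I_b -> nat) (T : Type)
  (X : forall i : 'I_b, 'I_(s i) -> T -> R).

Local Notation rmin := (row_min b s T X).
Local Notation Pt := (Ptilde b s T X).

Lemma foldr_min_le (v : seq R) x0 y : y \in v -> foldr Num.min x0 v <= y.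
Proof.
elim: v => [//|a v IH] /=; rewrite inE => /orP [/eqP -> | yv].
  by rewrite ge_min lexx.
by rewrite ge_min (IH yv) orbT.
Qed.

Lemma foldr_min_mem (v : seq R) x0 : foldr Num.min x0 v \in x0 :: v.
Proof.
elim: v => [|a v IH] /=; first by rewrite inE eqxx.
rewrite {1}/Order.min; case: ifP => _; first by rewrite !inE eqxx orbT.
by move: IH; rewrite !inE => /orP [->|->]; rewrite ?orbT.
Qed.

Lemma row_min_le i w j : rmin i w <= X i j w.
Proof. by rewrite /row_min /=; apply: foldr_min_le; apply: map_f; rewrite mem_enum. Qed.

Lemma row_min_ex i w : (0 < s i)%N -> exists j, rmin i w = X i j w.
Proof.
move=> hs; rewrite /row_min /=.
set v := [seq X i j w | j <- enum 'I_(s i)].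
have hv : v != [::].
  by rewrite /v -size_eq0 size_map size_enum_ord -lt0n.
have : foldr Num.min (head 0 v) v \in v.
  have := foldr_min_mem v (head 0 v); rewrite inE => /orP [/eqP -> | //].
  by case: v hv => //= a v' _; rewrite inE eqxx.
by case/mapP => j _ ->; exists j.
Qed.

Lemma ord_stat_le w k x : (0 < k <= b)%N ->
  (ord_stat b s T X w k <= x) = (k <= \sum_(l < b) ((Pt l w <= x)%R : nat))%N.
Proof.
case/andP => k0 kb; rewrite /ord_stat.
set L := sort _ _.
have sL : sorted <=%O L by apply: sort_le_sorted.
have cL : count (<= x)%O L = (\sum_(l < b) ((Pt l w <= x)%R : nat))%N.
  have /permP -> := permEl (perm_sort <=%O [seq Pt i w | i <- enum 'I_b]).
  by rewrite count_map -count_enum_sum.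
have szL : size L = b by rewrite /L size_sort size_map size_enum_ord.
case: (leqP k (\sum_(l < b) ((Pt l w <= x)%R : nat))%N) => h.
  apply: nth_count_le => //; rewrite cL; by rewrite prednK.
apply/negbTE; rewrite -ltNge; apply: nth_count_gt => //; rewrite cL szL.
apply/andP; split; rewrite -ltnS prednK //.
Qed.

Definition BH (N : nat -> nat) : nat :=
  (\max_(k < b.+1 | (0 < (k:nat))%N && ((k:nat) <= N k)%N) (k:nat))%N.

Lemma BH_le N : (BH N <= b)%N.
Proof. by apply/bigmax_leqP => k _; rewrite -ltnS; exact: ltn_ord. Qed.

Lemma BH_ge N k : (0 < k <= b)%N -> (k <= N k)%N -> (k <= BH N)%N.
Proof.
case/andP => k0 kb kN.
have := @leq_bigmax_cond _ (fun k : 'I_b.+1 => (0 < (k:nat))%N && ((k:nat) <= N k)%N)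
  (fun k => k : nat) (Ordinal (kb : (k < b.+1)%N)).
by rewrite /= k0 kN => /(_ isT).
Qed.

Lemma BH_attain N : (0 < BH N)%N -> (BH N <= N (BH N))%N.
Proof.
move=> hB.
have hc : (0 < #|[pred k : 'I_b.+1 | (0 < (k:nat))%N && ((k:nat) <= N k)%N]|)%N.
  rewrite lt0n; apply/negP => /eqP /card0_eq h0.
  move: hB; rewrite /BH big_pred0 // => k; have := h0 k; by rewrite !inE.
have [k0 hk0 e] := @eq_bigmax_cond _ [pred k : 'I_b.+1 | (0 < (k:nat))%N && ((k:nat) <= N k)%N]
  (fun k => k : nat) hc.
have -> : BH N = k0.
  by rewrite -e /BH; apply: eq_bigl => k; rewrite inE.
by move: hk0; rewrite inE => /andP [].
Qed.

Lemma BH_ub N m : (m <= b)%N -> (BH N < m)%N -> (N m < m)%N.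
Proof.
move=> mb hm; rewrite ltnNge; apply/negP => h.
have : (m <= BH N)%N by apply: BH_ge => //; rewrite mb andbT; apply: leq_ltn_trans hm.
by rewrite leqNgt hm.
Qed.

Lemma BH_swap N N' : (0 < BH N)%N ->
  (forall m, (BH N <= m <= b)%N -> N' m = N m) -> BH N' = BH N.
Proof.
move=> hB heq; apply/eqP; rewrite eqn_leq; apply/andP; split.
  apply/bigmax_leqP => k /andP [k0 kN]; rewrite leqNgt; apply/negP => hk.
  have kb : (k <= b)%N by rewrite -ltnS.
  have := @BH_ub N k kb hk; rewrite -heq ?kb ?(ltnW hk) // ltnNge kN //.
apply: BH_ge; first by rewrite hB BH_le.
rewrite heq; [exact: (BH_attain N hB) | by rewrite leqnn BH_le].
Qed.

Lemma eq_BH N N' : (forall m, (0 < m <= b)%N -> N m = N' m) -> BH N = BH N'.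
Proof.
move=> h; apply: eq_bigl => k; case: (posnP k) => [->//|k0] /=.
by rewrite h // k0 -ltnS ltn_ord.
Qed.

End Comb.

Section Pointwise.
Context {R : realType} (b : nat) (s : 'I_b -> nat) (T : Type)
  (X : forall i : 'I_b, 'I_(s i) -> T -> R) (H : forall i : 'I_b, 'I_(s i) -> bool)
  (alpha : R).
Hypothesis hb : (0 < b)%N.
Hypothesis hs : forall i, (0 < s i)%N.
Hypothesis ha : 0 < alpha.

Local Notation rmin := (row_min b s T X).
Local Notation Pt := (Ptilde b s T X).
Local Notation n := (ntot b s).
Local Notation sb := (sbar b s : R).
Local Notation Bx := (Bidx b s T X alpha).

Definition thr (m : nat) : R := m%:R * alpha / b%:R.
Definition tB (m : nat) : R := m%:R * alpha / n%:R.

Lemma n_gt0 : (0 < n)%N.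
Proof.
rewrite /ntot (bigD1 (Ordinal hb)) //=; exact: leq_trans (hs _) (leq_addr _ _).
Qed.

Lemma sb_gt0 : 0 < sb.
Proof. by rewrite /sbar divr_gt0 // ltr0n ?n_gt0. Qed.

Lemma sb_tB m : sb * tB m = thr m.
Proof.
rewrite /sbar /tB /thr; field; apply/andP; split; rewrite pnatr_eq0 -lt0n //; exact: n_gt0.
Qed.

Lemma thr_mono m m' : (m <= m')%N -> thr m <= thr m'.
Proof.
by move=> h; rewrite /thr ler_pM2r ?invr_gt0 ?ltr0n // ler_pM2r // ler_nat.
Qed.

Lemma X_Pt i j w m : X i j w <= tB m -> Pt i w <= thr m.
Proof.
move=> h; rewrite /Ptilde -sb_tB ler_pM2l ?sb_gt0 //.
exact: le_trans (@row_min_le _ b s T X i w j) h.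
Qed.

Lemma Pt_rmin i w m : Pt i w <= thr m -> rmin i w <= tB m.
Proof. by rewrite /Ptilde -sb_tB ler_pM2l ?sb_gt0. Qed.

Definition Nfull (w : T) (m : nat) : nat := (\sum_(l < b) ((Pt l w <= thr m)%R : nat))%N.

Lemma Bidx_BH w : Bx w = BH b (Nfull w).
Proof.
apply: eq_bigl => k; case: (posnP k) => [->//|k0] /=.
by rewrite ord_stat_le // k0 -ltnS ltn_ord.
Qed.

Lemma Bx_le w : (Bx w <= b)%N.
Proof. by rewrite Bidx_BH BH_le. Qed.

Lemma ord_stat_B w : (0 < Bx w)%N -> ord_stat b s T X w (Bx w) <= thr (Bx w).
Proof.
move=> h; rewrite ord_stat_le ?h ?Bx_le //.
by have := @BH_attain b (Nfull w); rewrite -Bidx_BH => /(_ h).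
Qed.

Lemma R_ge_B w : (0 < Bx w)%N -> (Bx w <= Rnum b s T X alpha w)%N.
Proof.
move=> hB.
have h1 : (Bx w <= \sum_(l < b) ((Pt l w <= ord_stat b s T X w (Bx w))%R : nat))%N.
  by rewrite -(@ord_stat_le _ b s T X w (Bx w)) ?hB ?Bx_le.
apply: (leq_trans h1); rewrite /Rnum; apply: leq_sum => i _.
case: leP => // hi.
have [j0 hj0] := @row_min_ex _ b s T X i w (hs i).
rewrite (bigD1 j0) //=; apply: leq_trans (leq_addr _ _).
rewrite /rejected hB hi /= lt0b -hj0.
by apply: Pt_rmin; apply: le_trans hi (ord_stat_B w hB).
Qed.

(* pattern-based BH index with block i set to -infinity *)
Definition qv (i : 'I_b) (w : T) : {ffun 'I_b -> {set 'I_b.+1}} :=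
  [ffun l => if l == i then [set: 'I_b.+1]%SET else [set m : 'I_b.+1 | Pt l w <= thr m]%SET].

Definition Bq (q : {ffun 'I_b -> {set 'I_b.+1}}) : nat :=
  BH b (fun m => \sum_(l < b) ((inord m : 'I_b.+1) \in q l : nat))%N.

Definition Bi (i : 'I_b) (w : T) : nat := Bq (qv i w).

Lemma Bi_swap i j w : (0 < Bx w)%N -> X i j w <= tB (Bx w) -> Bi i w = Bx w.
Proof.
move=> hB hX; rewrite /Bi /Bq Bidx_BH.
have hB' : (0 < BH b (Nfull w))%N by rewrite -Bidx_BH.
transitivity (BH b (fun m => \sum_(l < b) (((l == i) || (Pt l w <= thr m)%R) : nat))%N).
  apply: eq_BH => m /andP [m0 mb]; apply: eq_bigr => l _.
  by rewrite ffunE; case: eqP => _; rewrite ?in_setT ?inE ?inordK.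
apply: (@BH_swap b _ _ hB') => m /andP [m1 m2]; rewrite /Nfull; apply: eq_bigr => l _.
case: eqP => [->|//] /=.
apply/esym; apply/eqP; rewrite eqb1.
apply: le_trans (@X_Pt i j w (Bx w) hX) _; rewrite -Bidx_BH in m1; exact: thr_mono.
Qed.

Definition cf i j (k : 'I_b.+1) : R := if ~~ H i j && (0 < (k : nat))%N then (k%:R)^-1 else 0.
Definition ev i j (k : 'I_b.+1) (w : T) : bool := (X i j w <= tB k) && (Bi i w == k).
Definition RHSf w : R := \sum_(i < b) \sum_(j < s i) \sum_(k < b.+1) cf i j k * (ev i j k w)%:R.

Lemma cf_ge0 i j k : 0 <= cf i j k.
Proof. by rewrite /cf; case: ifP => // _; rewrite invr_ge0 ler0n. Qed.

Lemma RHS_ge0 w : 0 <= RHSf w.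
Proof.
apply: sumr_ge0 => i _; apply: sumr_ge0 => j _; apply: sumr_ge0 => k _.
by apply: mulr_ge0; [exact: cf_ge0 | exact: ler0n].
Qed.

Lemma FDP_le w : FDP b s T X H alpha w <= RHSf w.
Proof.
rewrite /FDP; case: (posnP (Bx w)) => hB.
  rewrite (_ : Vnum _ _ _ _ _ _ _ = 0%N) ?mul0r ?RHS_ge0 //.
  by rewrite /Vnum big1 // => i _; rewrite big1 // => j _; rewrite /rejected hB.
set V := Vnum _ _ _ _ _ _ _; set Rn := Rnum _ _ _ _ _ _.
have hR : (Bx w <= Rn)%N by exact: R_ge_B.
apply: (@le_trans _ _ (V%:R / (Bx w)%:R)).
  apply: ler_wpM2l; first exact: ler0n.
  rewrite lef_pV2 ?posrE ?ltr0n // ?ler_nat; last by rewrite leq_max ltnS orbT.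
  exact: leq_trans hR (leq_maxl _ _).
have hV : (V <= \sum_(i < b) \sum_(j < s i) (~~ H i j && (X i j w <= tB (Bx w))%R))%N.
  apply: leq_sum => i _; apply: leq_sum => j _.
  rewrite /rejected; case: (H i j); rewrite ?andbF ?andbT //=.
  by case: (0 < Bx w)%N; case: (Pt i w <= _)%R; case: (X i j w <= _)%R.
apply: (@le_trans _ _ ((\sum_(i < b) \sum_(j < s i) (~~ H i j && (X i j w <= tB (Bx w))%R) : nat)%:R / (Bx w)%:R)).
  by apply: ler_wpM2r; [rewrite invr_ge0 ler0n | rewrite ler_nat].
rewrite natr_sum mulr_suml; apply: ler_sum => i _.
rewrite natr_sum mulr_suml; apply: ler_sum => j _.
have hsum : forall k0 : 'I_b.+1, cf i j k0 * (ev i j k0 w)%:R <= \sum_(k < b.+1) cf i j k * (ev i j k w)%:R.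
  move=> k0; rewrite (bigD1 k0) //= lerDl; apply: sumr_ge0 => k _.
  by apply: mulr_ge0; [exact: cf_ge0 | exact: ler0n].
case e: (~~ H i j && (X i j w <= tB (Bx w))%R); last first.
  rewrite mul0r; apply: le_trans (hsum ord0); apply: mulr_ge0; [exact: cf_ge0 | exact: ler0n].
move/andP: e => [hH hX].
have hBb : (Bx w < b.+1)%N by rewrite ltnS Bx_le.
apply: le_trans (hsum (Ordinal hBb)).
rewrite /cf /ev /= hH hB hX (Bi_swap i j w hB hX) eqxx /= mul1r mulr1.
done.
Qed.

End Pointwise.

Section Indep.
Context {d : measure_display} {T : measurableType d} {R : realType}
  (P : probability T R) (b : nat) (s : 'I_b -> nat)
  (X : forall i : 'I_b, 'I_(s i) -> T -> R).
Hypothesis hmeas : forall i j, measurable_fun setT (X i j).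

Local Notation rs := (row_sigma b s X).

Definition Gen i : set (set T) := [set E | exists (j : 'I_(s i)) (A : set R), measurable A /\ E = X i j @^-1` A].

Lemma rs_meas i A : rs i A -> measurable A.
Proof.
have hG : Gen i `<=` measurable.
  move=> _ [j [B [mB ->]]].
  by rewrite -[X i j @^-1` B]setTI; exact: hmeas measurableT B mB.
exact: (smallest_sub (@sigma_algebra_measurable _ T) hG).
Qed.

Lemma rs_gen i j A : measurable A -> rs i (X i j @^-1` A).
Proof. by move=> mA; apply: sub_gen_smallest; exists j, A. Qed.

Lemma rsT i : rs i setT.
Proof. exact: (@measurableT _ (g_sigma_algebraType (Gen i))). Qed.

Lemma rsI i A B : rs i A -> rs i B -> rs i (A `&` B).
Proof. exact: (@measurableI _ (g_sigma_algebraType (Gen i))). Qed.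

Lemma rsC i A : rs i A -> rs i (~` A).
Proof. exact: (@measurableC _ (g_sigma_algebraType (Gen i))). Qed.

Lemma rs_bigcap i (I : finType) (F : I -> set T) : (forall k, rs i (F k)) -> rs i (\bigcap_(k in setT) F k).
Proof. move=> h; apply: (@fin_bigcap_measurable _ (g_sigma_algebraType (Gen i))); [exact: finite_finset | move=> k _; exact: h]. Qed.

Lemma rs_bigcup i (I : finType) (F : I -> set T) : (forall k, rs i (F k)) -> rs i (\bigcup_(k in setT) F k).
Proof. move=> h; apply: (@fin_bigcup_measurable _ (g_sigma_algebraType (Gen i))); [exact: finite_finset | move=> k _; exact: h]. Qed.

Hypothesis hind : rows_independent P b s X.

Lemma indep_pattern (F : finType) (pi : 'I_b -> T -> F)
  (hpi : forall l v, rs l [set w | pi l w = v]) (i : 'I_b) (A : set T)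
  (hA : rs i A) (Q : pred {ffun 'I_b -> F}) (v0 : F) :
  let G := [set w | Q [ffun l => if l == i then v0 else pi l w]] in
  P (A `&` G) = (P A * P G)%E /\ measurable G.
Proof.
move=> G.
set D := [set q : {ffun 'I_b -> F} | Q q && (q i == v0)].
set Cyl := fun q : {ffun 'I_b -> F} => [set w | forall l, l != i -> pi l w = q l].
have hG : G = \bigcup_(q in D) Cyl q.
  apply/seteqP; split => w.
  - move=> hQ; exists [ffun l => if l == i then v0 else pi l w].
      by rewrite /D /= ffunE eqxx /= eqxx andbT; exact: hQ.
    by move=> l hl; rewrite ffunE (negbTE hl).
  - move=> [q /andP [hq /eqP hqi] hc]; rewrite /G /=.
    suff -> : [ffun l => if l == i then v0 else pi l w] = q by [].
    apply/ffunP => l; rewrite ffunE; case: eqP => [-> | /eqP hl]; [by rewrite hqi | exact: hc].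
have htriv : trivIset D Cyl.
  move=> q q' /andP [_ /eqP hq] /andP [_ /eqP hq'] [w [h1 h2]].
  apply/ffunP => l; case: (eqVneq l i) => [->|hl]; [by rewrite hq hq' | by rewrite -h1 // -h2].
have hmC q : measurable (Cyl q).
  have -> : Cyl q = \bigcap_(l in [set l | l != i]) [set w | pi l w = q l] by [].
  apply: fin_bigcap_measurable; [exact: finite_finset | move=> l _; exact: rs_meas (hpi l (q l))].
have hprod q (Ai : set T) : rs i Ai ->
    P (Ai `&` Cyl q) = (P Ai * \prod_(l < b | l != i) P [set w | pi l w = q l])%E.
  move=> hAi; set E := fun l => if l == i then Ai else [set w | pi l w = q l].
  have -> : Ai `&` Cyl q = \bigcap_(l in [set: 'I_b]) E l.
    apply/seteqP; split => w.
      move=> [hw hc] l _; rewrite /E; case: ifP => [_|/negbT hl] //; exact: hc.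
    move=> h; split; first by have := h i I; rewrite /E eqxx.
    by move=> l hl; have := h l I; rewrite /E (negbTE hl).
  rewrite hind; last by move=> l; rewrite /E; case: eqP => [->|_]; [exact: hAi | exact: hpi].
  by rewrite (bigD1 i) //= /E eqxx; congr (_ * _)%E; apply: eq_bigr => l hl; rewrite (negbTE hl).
have hAC q : P (A `&` Cyl q) = (P A * P (Cyl q))%E.
  rewrite hprod // -[Cyl q]setTI hprod; last exact: rsT.
  by rewrite probability_setT mul1e.
have hmG : measurable G.
  rewrite hG; apply: fin_bigcup_measurable => // ; exact: finite_finset.
split=> //.
rewrite hG setI_bigcupr measure_fin_bigcup //.
- rewrite measure_fin_bigcup //; last exact: finite_finset.
  rewrite ge0_mule_fsumr //; apply: eq_fsbigr => q _; exact: hAC.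
- exact: finite_finset.
- by move=> q q' hq hq' [w [[_ h1] [_ h2]]]; apply: htriv => //; exists w.
- by move=> q _; apply: measurableI => //; exact: rs_meas hA.
Qed.

End Indep.

Local Open Scope classical_set_scope.

Lemma in_set_bool (U : Type) (p : U -> bool) w : (w \in [set w | p w]) = p w.
Proof. by case: (boolP (p w)) => h; [rewrite mem_set | rewrite memNset //; apply/negP]. Qed.

Lemma unif_le (R : realType) (t : R) : 0 <= t <= 1 ->
  uniform_prob (@ltr01 R) `]-oo, t] = t%:E.
Proof.
move=> /andP [t0 t1].
rewrite /uniform_prob integral_uniform_pdf.
have -> : `]-oo, t] `&` `[0, 1] = `[0, t] :> set R.
  apply/seteqP; split => x /=; rewrite !in_itv /=.
    by move=> [h1 /andP [h2 h3]]; rewrite h2 h1.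
  move=> /andP [h1 h2]; split => //; rewrite h1 /=; exact: le_trans h2 t1.
rewrite (eq_integral (fun=> 1%:E)); last first.
  move=> x; rewrite inE /= in_itv /= => /andP [h1 h2].
  by rewrite /uniform_pdf h1 (le_trans h2 t1) subr0 invr1.
rewrite integral_cst //= lebesgue_measure_itv /= lte_fin.
case: ltP => h; first by rewrite mul1e -EFinD subr0.
by rewrite mule0; congr (_%:E); apply/eqP; rewrite eq_le t0 h.
Qed.

Lemma le_int_ge0 {d : measure_display} {T : measurableType d} {R : realType}
  (mu : {measure set T -> \bar R}) (f g : T -> \bar R) :
  (forall x, (0 <= f x)%E) -> (forall x, (f x <= g x)%E) ->
  (\int[mu]_x f x <= \int[mu]_x g x)%E.
Proof.
move=> f0 fg; have g0 x : (0 <= g x)%E := le_trans (f0 x) (fg x).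
rewrite !ge0_integralTE //; apply: ereal_sup_le => _ [h hf <-].
by exists h => // x; exact: le_trans (hf x) (fg x).
Qed.

Section Main.
Context {d : measure_display} {T : measurableType d} {R : realType}
  (P : probability T R) (b : nat) (s : 'I_b -> nat)
  (X : forall i : 'I_b, 'I_(s i) -> T -> R) (H : forall i : 'I_b, 'I_(s i) -> bool)
  (alpha : R).
Hypothesis hmeas : forall i j, measurable_fun setT (X i j).
Hypothesis hb : (0 < b)%N.
Hypothesis hs : forall i, (0 < s i)%N.
Hypothesis ha : 0 < alpha.
Hypothesis ha1 : alpha < 1.
Hypothesis hind : rows_independent P b s X.
Hypothesis hunif : forall i j, ~~ H i j -> forall t : R, 0 <= t <= 1 ->
  P (X i j @^-1` `]-oo, t]) = t%:E.

Local Notation Pt := (Ptilde b s T X).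
Local Notation rmin := (row_min b s T X).
Local Notation thra := (thr b alpha).
Local Notation tBa := (tB b s alpha).

Definition pi (l : 'I_b) (w : T) : {set 'I_b.+1} := [set m : 'I_b.+1 | Pt l w <= thra m]%SET.

Lemma Pt_iff l w m : (Pt l w <= thra m) = (rmin l w <= tBa m).
Proof. by rewrite /Ptilde -(sb_tB b s alpha hb hs) ler_pM2l ?(sb_gt0 b s hb hs). Qed.

Lemma hpi l v : row_sigma b s X l [set w | pi l w = v].
Proof.
set Y := fun m : 'I_b.+1 => \bigcup_(j in [set: 'I_(s l)]) (X l j @^-1` `]-oo, tBa m]).
have hY m w : Y m w <-> (Pt l w <= thra m).
  rewrite Pt_iff; split.
    by move=> [j _ /=]; rewrite in_itv /= => hj; exact: le_trans (@row_min_le _ b s T X l w j) hj.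
  have [j0 e] := @row_min_ex _ b s T X l w (hs l).
  by move=> h; exists j0 => //=; rewrite in_itv /= -e.
have -> : [set w | pi l w = v] = \bigcap_(m in [set: 'I_b.+1]) (if m \in v then Y m else ~` Y m).
  apply/seteqP; split => w /=.
    move=> e m _; rewrite -e /pi inE; case: ifP => h; [by apply/hY | by move/hY; rewrite h].
  move=> h; apply/setP => m; rewrite /pi inE; have := h m I.
  case: ifP => hm; first by move/hY => ->.
  by move=> hn; apply/negP => /hY.
apply: rs_bigcap => m; case: ifP => _; [|apply: rsC]; apply: rs_bigcup => j;
  apply: rs_gen; exact: measurable_itv.
Qed.

Definition G (i : 'I_b) (k : 'I_b.+1) : set T := [set w | Bi b s T X alpha i w == k].

Lemma indepG i k (A : set T) : row_sigma b s X i A ->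
  P (A `&` G i k) = (P A * P (G i k))%E /\ measurable (G i k).
Proof.
move=> hA.
exact: (@indep_pattern d T R P b s X hmeas hind _ pi hpi i A hA (fun q => Bq b q == k) [set: 'I_b.+1]%SET).
Qed.

Lemma b_le_n : (b <= ntot b s)%N.
Proof.
rewrite /ntot -[b in (b <= _)%N]card_ord -sum1_card; apply: leq_sum => i _; exact: hs.
Qed.

Lemma tB_01 k : (k <= b)%N -> 0 <= tBa k <= 1.
Proof.
move=> kb; have n0 : (0 < ntot b s)%N := n_gt0 b s hb hs.
apply/andP; split.
  by rewrite /tB divr_ge0 // mulr_ge0 // ?ler0n // ltW.
rewrite /tB ler_pdivrMr ?ltr0n // mul1r.
apply: (@le_trans _ _ (k%:R)).
  by rewrite -[X in _ <= X]mulr1 ler_wpM2l ?ler0n // ltW.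
rewrite ler_nat; exact: leq_trans kb b_le_n.
Qed.

Definition S i j k : set T := [set w | ev b s T X alpha i j k w].

Lemma S_eq i j k : S i j k = X i j @^-1` `]-oo, tBa k] `&` G i k.
Proof.
apply/seteqP; split => w /=; rewrite /ev.
  by move=> /andP [h1 h2]; split => //=; rewrite in_itv /=.
move=> [h1 h2]; rewrite /S /ev /=; rewrite in_itv /= in h1; by rewrite h1 h2.
Qed.

Lemma rsX i j k : row_sigma b s X i (X i j @^-1` `]-oo, tBa k]).
Proof. apply: rs_gen; exact: measurable_itv. Qed.

Lemma mG i k : measurable (G i k).
Proof. exact: (@indepG i k _ (rsT b s X i)).2. Qed.

Lemma mS i j k : measurable (S i j k).
Proof.
rewrite S_eq; apply: measurableI; last exact: mG.
exact: (@rs_meas d T R b s X hmeas i _ (rsX i j k)).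
Qed.

Lemma PS i j k : ~~ H i j -> P (S i j k) = ((tBa k)%:E * P (G i k))%E.
Proof.
move=> hH; rewrite S_eq (@indepG i k _ (rsX i j k)).1 hunif //.
by apply: tB_01; rewrite -ltnS.
Qed.

Lemma sumG i : (\sum_(k < b.+1) P (G i k) <= 1)%E.
Proof.
rewrite -(@measure_bigsetU_ord _ _ _ P b.+1 xpredT (G i)).
- by apply: probability_le1; apply: bigsetU_measurable => k _; exact: mG.
- by move=> k; exact: mG.
move=> k k' _ _ [w [/= /eqP h1 /eqP h2]]; apply: val_inj => /=; by rewrite -h1 -h2.
Qed.

Local Notation cff := (@cf R b s H).

Lemma mt i j k : measurable_fun setT (fun w : T => ((cff i j k * \1_(S i j k) w)%R%:E : \bar R)).
Proof.
apply/measurable_EFinP; apply: measurable_realfun.measurable_funM.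
  exact: measurable_cst.
exact: measurable_indic (mS i j k).
Qed.

Lemma t_ge0 i j k w : (0 <= (cff i j k * \1_(S i j k) w)%R%:E)%E.
Proof. by rewrite lee_fin; apply: mulr_ge0; [exact: cf_ge0 | rewrite indicE ler0n]. Qed.

Lemma int_RHS : (\int[P]_w (RHSf b s T X H alpha w)%:E =
  \sum_(i < b) \sum_(j < s i) \sum_(k < b.+1) ((cff i j k)%:E * P (S i j k)))%E.
Proof.
have e : (fun w => (RHSf b s T X H alpha w)%:E) =
    (fun w => \sum_(i < b) \sum_(j < s i) \sum_(k < b.+1) (cff i j k * \1_(S i j k) w)%R%:E)%E.
  apply/funext => w; rewrite /RHSf -sumEFin; apply: eq_bigr => i _.
  rewrite -sumEFin; apply: eq_bigr => j _; rewrite -sumEFin; apply: eq_bigr => k _.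
  by rewrite indicE /S in_set_bool.
rewrite e ge0_integral_sum //; first last.
- move=> i w _; apply: sume_ge0 => j _; apply: sume_ge0 => k _; exact: t_ge0.
- move=> i; apply: emeasurable_sum => j; apply: emeasurable_sum => k; exact: mt.
apply: eq_bigr => i _; rewrite ge0_integral_sum //; first last.
- move=> j w _; apply: sume_ge0 => k _; exact: t_ge0.
- move=> j; apply: emeasurable_sum => k; exact: mt.
apply: eq_bigr => j _; rewrite ge0_integral_sum //; first last.
- move=> k w _; exact: t_ge0.
- exact: mt.
apply: eq_bigr => k _.
under eq_integral do rewrite EFinM.
rewrite ge0_integralZl //.
- by rewrite integral_indic ?setIT //; exact: mS.
- apply/measurable_EFinP; exact: measurable_indic (mS i j k).
- by rewrite lee_fin; exact: cf_ge0.
Qed.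

Lemma main_bound : (\int[P]_w (FDP b s T X H alpha w)%:E <= alpha%:E)%E.
Proof.
apply: le_trans (@le_int_ge0 d T R P _ (fun w => (RHSf b s T X H alpha w)%:E) _ _) _.
- by move=> w; rewrite lee_fin /FDP; apply: divr_ge0; exact: ler0n.
- by move=> w; rewrite lee_fin; exact: (FDP_le b s T X H alpha hb hs ha w).
rewrite int_RHS.
have n0 : (0 < ntot b s)%N := n_gt0 b s hb hs.
set c := alpha / (ntot b s)%:R.
have c0 : 0 <= c by rewrite /c divr_ge0 // ltW.
apply: (@le_trans _ _ (\sum_(i < b) \sum_(j < s i) c%:E)%E).
  apply: lee_sum => i _; apply: lee_sum => j _.
  case: (boolP (H i j)) => hH.
    rewrite big1 ?lee_fin // => k _.
    by rewrite /cf hH /= mul0e.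
  have e k : ((cff i j k)%:E * P (S i j k) = (if (0 < (k : nat))%N then c else 0)%:E * P (G i k))%E.
    rewrite PS // muleA -EFinM; congr (_%:E * _)%E; rewrite /cf hH /=.
    case: ifP => hk; last by rewrite mul0r.
    rewrite /tB /c; field; apply/andP; split; rewrite pnatr_eq0 -lt0n //.
  under eq_bigr do rewrite e.
  apply: (@le_trans _ _ (\sum_(k < b.+1) (c%:E * P (G i k)))%E).
    apply: lee_sum => k _; apply: lee_wpmul2r; first exact: measure_ge0.
    by rewrite lee_fin; case: ifP.
  rewrite -ge0_sume_distrr; last by move=> k _; exact: measure_ge0.
  rewrite -[X in (_ <= X)%E]mule1; apply: lee_wpmul2l; first by rewrite lee_fin.
  exact: sumG.
have -> : (\sum_(i < b) \sum_(j < s i) c%:E)%E = (\sum_(i < b) \sum_(j < s i) c)%:E.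
  by rewrite -sumEFin; apply: eq_bigr => i _; rewrite sumEFin.
rewrite lee_fin.
under eq_bigr do rewrite sumr_const card_ord.
rewrite sumrMnr -mulr_natr /c divfK //.
by rewrite pnatr_eq0 -lt0n.
Qed.

End Main.

Theorem mainTheorem1 (d : measure_display) (T : measurableType d) (R : realType)
  (P : probability T R) (b : nat) (s : 'I_b -> nat)
  (X : forall i : 'I_b, 'I_(s i) -> {RV P >-> R})
  (H : forall i : 'I_b, 'I_(s i) -> bool)
  (alpha : R) :
  (0 < b)%N -> (forall i, 0 < s i)%N ->
  (forall i (j : 'I_(s i)), ~~ H i j ->
     forall A : set R, measurable A ->
       distribution P (X i j) A = uniform_prob (@ltr01 R) A) ->
  rows_independent P b s (fun i j => (X i j : T -> R)) ->
  0 < alpha < 1 ->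
  (FDR P b s (fun i j => (X i j : T -> R)) H alpha <= alpha%:E)%E.
Proof.
move=> hb hs hunif hind /andP [ha ha1].
have hmeas : forall i j, measurable_fun setT ((fun i j => (X i j : T -> R)) i j).
  by move=> i j; exact: measurable_funPT.
apply: (@main_bound d T R P b s (fun i j => (X i j : T -> R)) H alpha hmeas hb hs ha ha1 hind).
move=> i j hH t ht /=.
rewrite -(@unif_le R t ht) -(hunif i j hH) //; exact: measurable_itv.
Qed.
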